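(* Let $G\in\mathcal{G}_{k,n,p}$ and $v\neq w\in V(G)$. Then $|H_{wv}-n|\lesssim (pn)^k$.
   Context: Fix an integer $k\ge2$ and let $p=p(n)$ satisfy $\frac{\log n}{n^{(k-1)/k}}\le p\le 1-\Omega(\frac{\log^4 n}{n})$. $\mathcal{G}_{k,n,p}$ denotes the set of graphs $G$ on $n$ vertices satisfying: (i) $G$ is not bipartite; (ii) $\operatorname{diam}(G)\le k$; (iii) every vertex has degree $d(v)=pn\pm\mathcal{O}(\sqrt{pn\log n})$; (iv) $2|E(G)|=pn^2\pm\mathcal{O}(\sqrt{pn^2\log n})$; (v) $|N(v)\cap N(w)|=p^2n\pm\mathcal{O}(\max\{\sqrt{p^2n\log n},\log n\})$ for all $v\ne w$; (vi) the unit eigenvector $\phi$ of the largest adjacency eigenvalue has entries $\phi_i=\frac1{\sqrt n}\pm\mathcal{O}(\frac{\log^{3/2}n}{\sqrt p\,n\log(pn)})$; (vii) $\lambda_1=(1+o(1))pn$; (viii) $\max\{|\lambda_2|,|\lambda_n|\}=\mathcal{O}(\sqrt{pn})$, where $\lambda_1\ge\dots\ge\lambda_n$ are the adjacency eigenvalues. Asymptotic notation is as $n\to\infty$ with constants independent of $n$; $f\lesssim g$ means $f=\mathcal{O}(g)$. $H_{wv}$ is the expected first hitting time of $v$ for a simple random walk on $G$ started at $w$. *)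

(* Defs.v *)
From HB Require Import structures.
From mathcomp Require Import all_boot all_order all_algebra.
From mathcomp Require Import all_classical all_reals all_analysis.
Set Implicit Arguments. Unset Strict Implicit. Unset Printing Implicit Defensive.
Import Order.TTheory GRing.Theory Num.Theory.
Import numFieldNormedType.Exports.
Local Open Scope ring_scope.

Section GraphDefs.
Context {R : realType} {n : nat}.
Variable e : rel 'I_n.

Definition is_simple_graph : Prop := symmetric e /\ irreflexive e.

Definition deg (x : 'I_n) : nat := #|[pred y | e x y]|.

Definition codeg (x y : 'I_n) : nat := #|[pred z | e x z && e y z]|.

Definition nedges : nat :=
  #|[pred xy : 'I_n * 'I_n | e xy.1 xy.2 && (xy.1 < xy.2)%N]|.

Definition bipartite : Prop :=
  exists f : 'I_n -> bool, forall x y, e x y -> f x != f y.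

Definition diam_le (k : nat) : Prop :=
  forall x y : 'I_n, exists s : seq 'I_n,
    (size s <= k)%N /\ path e x s /\ last x s = y.

Definition adjmx : 'M[R]_n := \matrix_(i, j) (e i j)%:R.

(* lam = (λ_1 >= ... >= λ_n), the adjacency eigenvalues with multiplicity *)
Definition adj_spectrum (lam : seq R) : Prop :=
  [/\ size lam = n, sorted (fun x y => y <= x) lam &
      char_poly adjmx = \prod_(x <- lam) ('X - x%:P)].

Definition trans (x y : 'I_n) : R := if e x y then (deg x)%:R^-1 else 0.

(* P_w(τ_v = t): the walk x_0 = w, ..., x_t = v avoids v before time t *)
Definition first_hit_prob (w v : 'I_n) (t : nat) : R :=
  \sum_(s : (t.+1).-tuple 'I_n |
          [&& nth w s 0 == w, nth w s t == v &
              all (fun i => nth w s i != v) (iota 0 t)])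
    \prod_(i < t) trans (nth w s i) (nth w s i.+1).

(* H_{wv} = E_w[τ_v] = Σ_t t P_w(τ_v = t)  (extended real) *)
Definition hitting_time (w v : 'I_n) : \bar R :=
  (\sum_(0 <= t <oo) ((t%:R * first_hit_prob w v t)%:E))%E.

(* membership in G_{k,n,p}, with explicit constants C3 C4 C5 C6 C8 for the
   O-terms in (iii),(iv),(v),(vi),(viii), and eps for the o(1) in (vii) *)
Definition in_Gknp (k : nat) (p C3 C4 C5 C6 C8 eps : R) : Prop :=
  let nR := (n%:R : R) in
  let lg := ln nR in
  [/\ is_simple_graph, ~ bipartite, diam_le k,
      [/\ (forall v, `|(deg v)%:R - p * nR| <= C3 * Num.sqrt (p * nR * lg)),
      `|2 * (nedges%:R) - p * nR ^+ 2| <= C4 * Num.sqrt (p * nR ^+ 2 * lg) &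
      (forall v w, v != w ->
         `|(codeg v w)%:R - p ^+ 2 * nR|
           <= C5 * Num.max (Num.sqrt (p ^+ 2 * nR * lg)) lg)] &
      exists lam : seq R, adj_spectrum lam /\
        [/\ (exists phi : 'cV[R]_n,
               [/\ adjmx *m phi = nth 0 lam 0 *: phi,
                   \sum_i (phi i 0) ^+ 2 = 1 &
                   forall i, `|phi i 0 - (Num.sqrt nR)^-1|
                     <= C6 * (lg `^ (3%:R / 2%:R))
                           / (Num.sqrt p * nR * ln (p * nR))]),
            `|nth 0 lam 0 - p * nR| <= eps * (p * nR) &
            Num.max `|nth 0 lam 1| `|nth 0 lam n.-1| <= C8 * Num.sqrt (p * nR)]].

End GraphDefs.

(* Main.v *)
Require Import Defs.
From HB Require Import structures.
From mathcomp Require Import all_boot all_order all_algebra.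
From mathcomp Require Import all_classical all_reals all_analysis.
From mathcomp Require Import ring lra.
Import Order.TTheory GRing.Theory Num.Theory.
Import numFieldNormedType.Exports.
Local Open Scope ring_scope.
Lemma expR1_le4 (R : realType) : expR (1 : R) <= 4.
Proof.
have h : expR (- (2^-1 : R)) >= 2^-1.
  apply: le_trans (expR_ge1Dx _); lra.
have e2 : expR (2^-1 : R) <= 2.
  rewrite expRN in h.
  have hp : 0 < expR (2^-1 : R) := expR_gt0 _.
  have hi : expR (2^-1 : R) * (expR (2^-1 : R))^-1 = 1 by rewrite divff // gt_eqF.
  nra.
have -> : (1 : R) = 2^-1 + 2^-1 by field.
rewrite expRD.
have hp : 0 <= expR (2^-1 : R) := ltW (expR_gt0 _).
nra.
Qed.

Lemma ln_ge1 (R : realType) (n : nat) : (4 <= n)%N -> 1 <= ln (n%:R : R).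
Proof.
move=> n4.
have n0 : (0 : R) < n%:R by rewrite ltr0n; apply: leq_trans n4.
rewrite -[X in X <= _](expRK 1) ler_ln ?posrE ?expR_gt0 //.
apply: le_trans (expR1_le4 R) _.
by rewrite ler_nat.
Qed.

Lemma real_facts (R : realType) (k : nat) (pn : R) (n : nat) : (2 <= k)%N -> (4 <= n)%N ->
  ln (n%:R : R) / n%:R `^ ((k - 1)%:R / k%:R) <= pn ->
  [/\ 1 <= pn * n%:R, ln (n%:R : R) <= pn * n%:R & n%:R <= (pn * n%:R) ^+ k].
Proof.
move=> k2 n4 hp.
have n0 : (0 : R) < n%:R by rewrite ltr0n; apply: leq_trans n4.
have n1 : (1 : R) <= n%:R by rewrite ler1n; apply: leq_trans n4.
have k0 : (0 : R) < k%:R by rewrite ltr0n; apply: leq_trans k2.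
set a : R := (k - 1)%:R / k%:R.
set X := n%:R `^ a.
have X0 : 0 < X by apply: powR_gt0.
have a1 : a <= 1.
  by rewrite /a ler_pdivrMr // mul1r ler_nat leq_subr.
have Xn : X <= n%:R.
  by rewrite /X -[X in _ <= X](powRr1 (ltW n0)); apply: ler_powR.
have Xk : X ^+ k = n%:R ^+ (k - 1).
  rewrite /X -powR_mulrn ?powR_ge0 // -powRrM /a divfK ?gt_eqF //.
  by rewrite powR_mulrn // ltW.
set Y := n%:R / X.
have Y1 : 1 <= Y by rewrite /Y ler_pdivlMr // mul1r.
have L1 := @ln_ge1 R n n4.
have hP : Y * ln (n%:R : R) <= pn * n%:R.
  move: hp; rewrite /Y -(ler_pM2r n0) => hp.
  by apply: le_trans hp; rewrite mulrC mulrA mulrAC.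
have Yk : Y ^+ k = n%:R.
  rewrite /Y exprMn exprVn Xk.
  have -> : k = (k - 1).+1 by rewrite subn1 prednK //; apply: leq_trans k2.
  by rewrite exprS !subn1 /= mulfK // expf_neq0 // gt_eqF.
have hYP : Y <= pn * n%:R by apply: le_trans hP; rewrite ler_peMr // (le_trans ler01 Y1).
split.
- exact: le_trans Y1 hYP.
- by apply: le_trans hP; rewrite ler_peMl // (le_trans ler01 L1).
- have Y0 : 0 <= Y by exact: le_trans ler01 Y1.
  rewrite -[X in X <= _]Yk ler_pXn2r ?nnegrE //; first exact: ltnW.
  exact: le_trans Y0 hYP.
Qed.
Section Walk.
Variables (R : realType) (n : nat) (e : rel 'I_n) (v : 'I_n).

Local Notation tr := (@trans R n e).

Fixpoint Fh (t : nat) (x : 'I_n) : R :=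
  match t with 0 => (x == v)%:R | t'.+1 => (x != v)%:R * \sum_y tr x y * Fh t' y end.
Fixpoint Av (t : nat) (x : 'I_n) : R :=
  match t with 0 => (x != v)%:R | t'.+1 => (x != v)%:R * \sum_y tr x y * Av t' y end.

Lemma FhS t x : Fh t.+1 x = (x != v)%:R * \sum_y tr x y * Fh t y. Proof. by []. Qed.
Lemma AvS t x : Av t.+1 x = (x != v)%:R * \sum_y tr x y * Av t y. Proof. by []. Qed.

Lemma tr_ge0 x y : 0 <= tr x y.
Proof. by rewrite /trans; case: (e x y) => //; rewrite invr_ge0 ler0n. Qed.

Lemma tr_sum x : \sum_y tr x y <= 1.
Proof.
rewrite /trans -big_mkcond /= sumr_const.
have -> : #|[pred y | e x y]| = deg e x by [].
case: (deg e x) => [|d]; first by rewrite mulr0n ler01.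
by rewrite -[_ *+ _]mulr_natr mulVf ?pnatr_eq0.
Qed.

Lemma step_le (f g : 'I_n -> R) x : (forall y, f y <= g y) ->
  (x != v)%:R * \sum_y tr x y * f y <= (x != v)%:R * \sum_y tr x y * g y.
Proof.
move=> fg; apply: ler_wpM2l; first exact: ler0n.
by apply: ler_sum => y _; apply: ler_wpM2l; [exact: tr_ge0|exact: fg].
Qed.

Lemma step_ge0 (f : 'I_n -> R) x : (forall y, 0 <= f y) ->
  0 <= (x != v)%:R * \sum_y tr x y * f y.
Proof.
move=> f0; apply: mulr_ge0; first exact: ler0n.
by apply: sumr_ge0 => y _; apply: mulr_ge0; [exact: tr_ge0|exact: f0].
Qed.

Lemma Fh_ge0 t x : 0 <= Fh t x.
Proof. by elim: t x => [|t IH] x /=; [exact: ler0n| apply: step_ge0]. Qed.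

Lemma Av_ge0 t x : 0 <= Av t x.
Proof. by elim: t x => [|t IH] x /=; [exact: ler0n| apply: step_ge0]. Qed.

Lemma Av_v t : Av t v = 0.
Proof. by case: t => [|t] /=; rewrite eqxx ?mul0r. Qed.

Lemma step_le1 (f : 'I_n -> R) x : (forall y, f y <= 1) ->
  (x != v)%:R * \sum_y tr x y * f y <= (x != v)%:R.
Proof.
move=> f1; rewrite -[X in _ <= X]mulr1; apply: ler_wpM2l; first exact: ler0n.
apply: le_trans (tr_sum x); apply: ler_sum => y _.
by rewrite -[X in _ <= X]mulr1; apply: ler_wpM2l; [exact: tr_ge0|exact: f1].
Qed.

Lemma tele t x : Fh t.+1 x + Av t.+1 x <= Av t x.
Proof.
elim: t x => [|t IH] x.
  rewrite /= -mulrDr -big_split /=.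
  apply: le_trans (step_le1 (fun _ => 1) x _) => //.
  rewrite ler_wpM2l // ?ler0n //; apply: ler_sum => y _.
  by rewrite -mulrDr; case: (y == v); rewrite /= ?addr0 ?add0r.
rewrite FhS AvS (AvS t) -mulrDr -big_split /=.
under eq_bigr do rewrite -mulrDr.
exact: step_le.
Qed.

Lemma natb_le1 (b : bool) : (b%:R : R) <= 1.
Proof. by case: b; rewrite ?ler01. Qed.

Lemma Av_le1 t x : Av t x <= 1.
Proof.
elim: t x => [|t IH] x; first exact: natb_le1.
by rewrite AvS; apply: le_trans (step_le1 _ _ IH) _; exact: natb_le1.
Qed.

Lemma FA_le1 t x : Fh t x + Av t x <= 1.
Proof.
case: t => [|t]; first by rewrite /=; case: eqP => _; rewrite /= ?addr0 ?add0r.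
exact: le_trans (tele t x) (Av_le1 _ _).
Qed.

Lemma Av_mono j t x : (j <= t)%N -> Av t x <= Av j x.
Proof.
move=> /subnK <-; elim: (t - j)%N x => [|m IH] x; first by rewrite add0n.
rewrite addSn; apply: le_trans (IH x).
by apply: le_trans (tele _ x); rewrite lerDr Fh_ge0.
Qed.


Lemma good_path s x : path e x s -> last x s = v ->
  exists s', [/\ (size s' <= size s)%N, path e x s', last x s' = v &
                 all (fun y => y != v) (belast x s')].
Proof.
elim: s x => [|y s IH] x /=.
  by move=> _ ->; exists [::].
move=> /andP[exy ps] ls.
case: (eqVneq x v) => [xv|nxv]; first by exists [::]; rewrite /= xv.
have [s' [h1 h2 h3 h4]] := IH y ps ls.
by exists (y :: s'); rewrite /= exy h2 h3 nxv h4.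
Qed.

Lemma F_path (D : R) s x : 0 < D -> (forall y, (deg e y)%:R <= D) ->
  path e x s -> last x s = v -> all (fun y => y != v) (belast x s) ->
  D^-1 ^+ size s <= Fh (size s) x.
Proof.
move=> D0 hD; elim: s x => [|y s IH] x /=.
  by move=> _ -> _; rewrite eqxx.
move=> /andP[exy ps] ls /andP[nxv hs].
rewrite nxv mul1r (bigD1 y) //= exprS.
apply: le_trans (_ : tr x y * Fh (size s) y <= _); last first.
  rewrite lerDl; apply: sumr_ge0 => z _; apply: mulr_ge0; [exact: tr_ge0|exact: Fh_ge0].
have dpos : (0 < deg e x)%N by apply/card_gt0P; exists y.
apply: ler_pM; first by rewrite invr_ge0 ltW.
  by apply: exprn_ge0; rewrite invr_ge0 ltW.
  rewrite /trans exy lef_pV2 ?hD // posrE ?ltr0n //.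
exact: IH.
Qed.

Lemma Av_add j t b x : (forall y, Av t y <= b) -> 0 <= b -> Av (j + t)%N x <= Av j x * b.
Proof.
move=> hb b0; elim: j x => [|j IH] x.
  rewrite add0n /=; case: (eqVneq x v) => [->|nxv]; first by rewrite Av_v /= mul0r.
  by rewrite /= mul1r.
rewrite addSn !AvS; apply: le_trans (step_le _ _ x IH) _.
rewrite -mulrA mulr_suml; apply: ler_wpM2l; first exact: ler0n.
by apply: ler_sum => y _; rewrite mulrA.
Qed.

Lemma Av_geom (k : nat) (q : R) m r x : (forall y, Av k y <= 1 - q) -> q <= 1 ->
  Av (m * k + r)%N x <= (1 - q) ^+ m.
Proof.
move=> hk q1; have q0 : 0 <= 1 - q by rewrite subr_ge0.
elim: m x => [|m IH] x; first by rewrite mul0n add0n expr0 Av_le1.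
rewrite mulSn -addnA exprS.
apply: le_trans (Av_add _ _ _ _ IH _) _; first exact: exprn_ge0.
by apply: ler_wpM2r; [exact: exprn_ge0|exact: hk].
Qed.

Lemma sum_chunks (k : nat) (q : R) w M : (forall y, Av k y <= 1 - q) -> 0 < q -> q <= 1 ->
  \sum_(0 <= t < (M * k)%N) Av t w <= k%:R / q * (1 - (1 - q) ^+ M).
Proof.
move=> hk q0 q1; elim: M => [|M IH]; first by rewrite mul0n big_geq // expr0 subrr mulr0.
rewrite mulSnr (@big_cat_nat _ _ _ (M * k)%N 0 (M * k + k)%N) ?leq_addr /=.
apply: le_trans (_ : _ <= k%:R / q * (1 - (1 - q) ^+ M) + (1 - q) ^+ M * k%:R) _.
  apply: lerD => //.
  apply: le_trans (_ : _ <= \sum_((M * k)%N <= i < (M * k + k)%N) (1 - q) ^+ M) _.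
    apply: ler_sum_nat => i /andP[hi _].
    apply: le_trans (Av_mono _ _ w hi) _.
    by rewrite -[(M * k)%N]addn0; apply: Av_geom.
  by rewrite sumr_const_nat addKn mulr_natr.
rewrite le_eqVlt; apply/orP; left; apply/eqP.
rewrite exprS; set X := _ ^+ M; field.
all: by rewrite ?gt_eqF.
Qed.

Lemma sum_Av (k : nat) (q : R) w T : (0 < k)%N -> (forall y, Av k y <= 1 - q) -> 0 < q -> q <= 1 ->
  \sum_(0 <= t < T) Av t w <= k%:R / q.
Proof.
move=> k0 hk q0 q1.
have TT : (T <= T * k)%N by rewrite leq_pmulr.
apply: le_trans (_ : _ <= \sum_(0 <= t < (T * k)%N) Av t w) _.
  rewrite (@big_cat_nat _ _ _ T 0 (T * k)%N) //= lerDl.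
  by apply: sumr_ge0 => i _; exact: Av_ge0.
apply: le_trans (sum_chunks _ _ w T hk q0 q1) _.
rewrite -[X in _ <= X]mulr1; apply: ler_wpM2l.
  by rewrite divr_ge0 ?ler0n // ltW.
by rewrite lerBlDr lerDl exprn_ge0 // subr_ge0.
Qed.

Lemma partial_tF w T :
  \sum_(0 <= t < T.+1) t%:R * Fh t w + T%:R * Av T w <= \sum_(0 <= t < T) Av t w.
Proof.
elim: T => [|T IH]; first by rewrite big_nat1 big_geq // !mul0r addr0.
rewrite big_nat_recr //= [X in _ <= X]big_nat_recr //=.
have h := tele T w.
have h2 : (T%:R + 1) * (Fh T.+1 w + Av T.+1 w) <= (T%:R + 1) * Av T w.
  by apply: ler_wpM2l => //; apply: addr_ge0 => //; exact: ler0n.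
rewrite -natr1 -FhS -AvS; nra.
Qed.


Lemma sum_tupleS (m : nat) (F : m.+1.-tuple 'I_n -> R) :
  \sum_(s : m.+1.-tuple 'I_n) F s = \sum_(y : 'I_n) \sum_(s : m.-tuple 'I_n) F [tuple of y :: s].
Proof.
rewrite pair_big /=.
rewrite (reindex (fun p : 'I_n * m.-tuple 'I_n => [tuple of p.1 :: p.2])) //=.
exists (fun s : m.+1.-tuple 'I_n => (thead s, [tuple of behead s])).
  move=> [y s] _ /=; congr pair; exact: val_inj.
move=> s _; apply: val_inj => /=; by rewrite [in RHS](tuple_eta s).
Qed.

Lemma sum_tuple0 (F : 0.-tuple 'I_n -> R) : \sum_(s : 0.-tuple 'I_n) F s = F [tuple].
Proof.
rewrite (eq_bigr (fun _ => F [tuple])); last by move=> s _; rewrite (tuple0 s).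
by rewrite sumr_const card_tuple expn0.
Qed.

Lemma all_iotaS (f : nat -> bool) m t : all f (iota m.+1 t) = all (fun i => f i.+1) (iota m t).
Proof. by elim: t m => //= t IH m; rewrite IH. Qed.

Definition cnd d (s : seq 'I_n) t := (nth d s t == v) && all (fun i => nth d s i != v) (iota 0 t).
Definition Pr d (s : seq 'I_n) t := \prod_(i < t) tr (nth d s i) (nth d s i.+1).

Lemma cnd_cons d y s t : cnd d (y :: s) t.+1 = (y != v) && cnd d s t.
Proof.
rewrite /cnd /= all_iotaS /=.
by case: (nth d s t == v); case: (y != v).
Qed.

Lemma Pr_cons d y s t : Pr d (y :: s) t.+1 = tr y (nth d s 0) * Pr d s t.
Proof. by rewrite /Pr big_ord_recl /=. Qed.

Lemma sum_pick (a : 'I_n) (f : 'I_n -> R) (c : bool) (r : R) :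
  \sum_i f i * (if (a == i) && c then r else 0) = f a * (if c then r else 0).
Proof.
rewrite (bigD1 a) //= eqxx big1 ?addr0 // => i /negbTE ia.
by rewrite eq_sym ia mulr0.
Qed.

Lemma fhp_gen t : forall x d,
  \sum_(s : t.+1.-tuple 'I_n) (if (nth d s 0 == x) && cnd d s t then Pr d s t else 0) = Fh t x.
Proof.
elim: t => [|t IH] x d.
  rewrite sum_tupleS.
  under eq_bigr => y _ do rewrite sum_tuple0 /=.
  rewrite (bigD1 x) //= big1 ?addr0; last first.
    by move=> y /negbTE yx; rewrite yx.
  rewrite eqxx /cnd /= andbT /Pr big_ord0.
  by case: (x == v).
rewrite sum_tupleS.
under eq_bigr => y _ do under eq_bigr => s _ do rewrite [tval _]/= cnd_cons Pr_cons [nth _ _ 0]/=.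
rewrite (bigD1 x) //= [X in _ + X]big1 ?addr0; last first.
  by move=> y /negbTE yx; apply: big1 => s _; rewrite yx.
rewrite eqxx /=.
under [in RHS]eq_bigr => y _ do rewrite -(IH y d) big_distrr /=.
rewrite exchange_big /=.
under [in RHS]eq_bigr => s _ do rewrite sum_pick.
case: (x != v) => /=.
  rewrite mul1r; apply: eq_bigr => s _.
  by case: (cnd d s t); rewrite ?mulr0.
by rewrite mul0r big1.
Qed.

Lemma fhp_Fh w t : first_hit_prob e w v t = Fh t w.
Proof.
rewrite /first_hit_prob big_mkcond /=.
by rewrite -(fhp_gen t w w).
Qed.


Lemma hit_bound (k : nat) (q : R) w : (0 < k)%N -> (forall y, Av k y <= 1 - q) -> 0 < q -> q <= 1 ->
  (0 <= hitting_time (R:=R) e w v /\ hitting_time (R:=R) e w v <= (k%:R / q)%:E)%E.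
Proof.
move=> k0 hk q0 q1.
have tge0 : forall t, (0 <= (t%:R * first_hit_prob (R:=R) e w v t)%:E)%E.
  by move=> t; rewrite lee_fin fhp_Fh mulr_ge0 ?ler0n ?Fh_ge0.
split; first by apply: nneseries_ge0 => t _ _; exact: tge0.
apply: lime_le; first by apply: is_cvg_nneseries => t _ _; exact: tge0.
apply: nearW => N; rewrite sumEFin lee_fin.
under eq_bigr do rewrite fhp_Fh.
case: N => [|T]; first by rewrite big_geq // divr_ge0 ?ler0n // ltW.
apply: le_trans (sum_Av _ _ w T k0 hk q0 q1).
apply: le_trans (partial_tF w T); rewrite lerDl.
by rewrite mulr_ge0 ?ler0n ?Av_ge0.
Qed.

Lemma Avk_bound (k : nat) (D : R) : 1 <= D -> (forall y, (deg e y)%:R <= D) -> diam_le e k ->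
  forall y, Av k y <= 1 - D^-1 ^+ k.
Proof.
move=> D1 hD hdiam y.
have D0 : 0 < D by exact: lt_le_trans ltr01 D1.
have [s [hs [ps ls]]] := hdiam y v.
have [s' [hs' ps' ls' as']] := good_path _ _ ps ls.
have dk : (size s' <= k)%N by apply: leq_trans hs' hs.
apply: le_trans (Av_mono _ _ y dk) _.
have h1 := FA_le1 (size s') y.
have h2 := F_path _ _ _ D0 hD ps' ls' as'.
have h3 : D^-1 ^+ k <= D^-1 ^+ size s'.
  apply: ler_wiXn2l => //; first by rewrite invr_ge0 ltW.
  by rewrite invr_le1 // unitfE gt_eqF.
lra.
Qed.

End Walk.

Local Open Scope classical_set_scope.
Local Open Scope ring_scope.

Theorem corollary4p3 (R : realType) (k : nat) (p : nat -> R) (c : R)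
    (C3 C4 C5 C6 C8 : R) (eps : nat -> R) :
  (2 <= k)%N -> 0 < c -> eps @ \oo --> (0 : R) ->
  (exists N0 : nat, forall n : nat, (N0 <= n)%N ->
     ln (n%:R : R) / (n%:R `^ ((k - 1)%:R / k%:R)) <= p n /\
     p n <= 1 - c * (ln (n%:R : R)) ^+ 4 / n%:R) ->
  exists (C : R) (N : nat), forall n : nat, (N <= n)%N ->
    forall e : rel 'I_n,
      in_Gknp (R := R) e k (p n) C3 C4 C5 C6 C8 (eps n) ->
      forall v w : 'I_n, v != w ->
        (`| hitting_time (R := R) e w v - (n%:R : R)%:E |
           <= (C * (p n * n%:R) ^+ k)%:E)%E.
Proof.
move=> k2 c0 _ [N0 hN].
exists (k%:R * (1 + `|C3|) ^+ k + 1), (maxn N0 4).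
move=> n; rewrite geq_max => /andP[nN0 n4] e hG v w vw.
have [hp1 _] := hN n nN0.
have [P1 PL Pk] := @real_facts R k (p n) n k2 n4 hp1.
set P := p n * n%:R in P1 PL Pk *.
have P0 : 0 <= P by exact: le_trans ler01 P1.
move: hG; rewrite /in_Gknp => -[hsimp hbip hdiam [hdeg _ _] _].
set D := (1 + `|C3|) * P.
have hD : forall y, (deg e y)%:R <= D.
  move=> y; have := hdeg y; rewrite ler_distl => /andP[_ h].
  apply: le_trans h _; rewrite /D mulrDl mul1r lerD2l.
  apply: le_trans (ler_wpM2r (sqrtr_ge0 _) (ler_norm C3)) _.
  apply: ler_wpM2l => //.
  rewrite -[X in _ <= X](ger0_norm P0) -sqrtr_sqr ler_sqrt ?sqr_ge0 // expr2.
  by move: (ler_wpM2l P0 PL); rewrite /P.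
have D1 : 1 <= D.
  by apply: le_trans P1 _; rewrite /D ler_peMl // lerDl.
have hq := @Avk_bound R n e v k D D1 hD hdiam.
have D0 : 0 < D by exact: lt_le_trans ltr01 D1.
have q0 : 0 < D^-1 ^+ k by rewrite exprn_gt0 // invr_gt0.
have q1 : D^-1 ^+ k <= 1.
  apply: exprn_ile1; first by rewrite invr_ge0 ltW.
  by rewrite invr_le1 // unitfE gt_eqF.
have k0 : (0 < k)%N by exact: ltnW.
have [H0 H1] := @hit_bound R n e v k _ w k0 hq q0 q1.
move: H0 H1; rewrite exprVn invrK.
case: (hitting_time (R:=R) e w v) => [h| |] //= H0 H1.
rewrite lee_fin.
rewrite lee_fin in H0; rewrite lee_fin in H1.
apply: le_trans (ler_normB _ _) _.
rewrite (ger0_norm H0) (ger0_norm (ler0n _ n)).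
rewrite mulrDl mul1r; apply: lerD => //.
by move: H1; rewrite /D exprMn mulrA.
Qed.
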